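(* Assume $f$ satisfies conditions (A0)–(A3) below. Then there exists a constant $C>0$ such that for every $\lambda\in[0,1]$ and every $x\in\mathscr E$, if $\mathscr F_\lambda(x)=0$ then $\|x\|<C$.
   Context: Let $n,m\ge1$, $\mathbf V=\mathbb R^n$ with Euclidean inner product $x\bullet z$ and norm $|x|$; for $\mathbf y=(y^1,\dots,y^m)\in\mathbf V^m$ put $|\mathbf y|:=\max_j|y^j|$. Fix reals $0=\tau_0<\tau_1<\dots<\tau_m<2\pi$ with $\tau_{m-j+1}=2\pi-\tau_j$. Let $f:\mathbb R\times\mathbf V\times\mathbf V^m\times\mathbf V\to\mathbf V$ and for $u:\mathbb R\to\mathbf V$ put $\mathbf u_t:=(u(t-\tau_1),\dots,u(t-\tau_m))$. Let $\mathscr E:=C^2_{2\pi}(\mathbb R;\mathbf V)$ be the space of $2\pi$-periodic $C^2$ maps with norm $\|u\|:=\max\{\|u\|_\infty,\|\dot u\|_\infty,\|\ddot u\|_\infty\}$, $\mathscr C:=C_{2\pi}(\mathbb R;\mathbf V)$, $\widetilde{\mathscr C}:=C_{2\pi}(\mathbb R;\mathbf V\times\mathbf V^m\times\mathbf V)$ (sup norms). Define $L:\mathscr E\to\mathscr C$, $Lu:=\ddot u-u$ (an isomorphism); $J:\mathscr E\to\widetilde{\mathscr C}$, $(Ju)(t):=(u(t),\mathbf u_t,\dot u(t))$; $N:\widetilde{\mathscr C}\to\mathscr C$, $N(x,\mathbf y,z)(t):=f(t,x(t),\mathbf y(t),z(t))-x(t)$; and $\mathscr F_\lambda(x):=x-\lambda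 L^{-1}N(Jx)$ for $\lambda\in[0,1]$. (Thus $\mathscr F_\lambda(x)=0$ iff $x$ is a $2\pi$-periodic solution of $\ddot x=\lambda f(t,x,\mathbf x_t,\dot x)+(1-\lambda)x$.) Conditions: (A0) $f$ continuous and $2\pi$-periodic in $t$. (A1) There is $R>0$ such that: $|x|\ge R$, $|\mathbf y|\le|x|$, $x\bullet z=0$ imply $x\bullet f(t,x,\mathbf y,z)>0$. (A2) There is a continuous $\phi:[0,\infty)\to(0,\infty)$ with $\int_0^\infty\frac{s\,ds}{\phi(s)}=\infty$ and $|f(t,x,\mathbf y,z)|\le\phi(|z|)$ whenever $|x|,|\mathbf y|\le R$. (A3) There are $\alpha,K>0$ with $|f(t,x,\mathbf y,z)|\le\alpha(x\bullet f(t,x,\mathbf y,z)+|z|^2)+K$ whenever $|x|,|\mathbf y|\le R$. *)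

(* Defs.v *)
From HB Require Import structures.
From mathcomp Require Import all_boot all_order all_algebra.
From mathcomp Require Import all_classical all_reals all_analysis.
Set Implicit Arguments. Unset Strict Implicit. Unset Printing Implicit Defensive.
Import Order.TTheory GRing.Theory Num.Theory.
Import numFieldNormedType.Exports.
Local Open Scope classical_set_scope.
Local Open Scope ring_scope.

(* V = R^n is represented by row vectors 'rV[R]_n; V^m by m x n matrices whose
   j-th row (j : 'I_m, 0-based) is y^{j+1}. *)

Definition edot (R : realType) (n : nat) (x z : 'rV[R]_n) : R :=
  \sum_(k < n) x 0 k * z 0 k.

Definition enorm (R : realType) (n : nat) (x : 'rV[R]_n) : R :=
  Num.sqrt (edot x x).

Definition ymax (R : realType) (m n : nat) (y : 'M[R]_(m, n)) : R :=
  \big[Num.max/0]_(j < m) enorm (row j y).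

Definition delays (R : realType) (m n : nat) (tau : 'I_m -> R)
  (u : R -> 'rV[R]_n) (t : R) : 'M[R]_(m, n) :=
  \matrix_(j < m) u (t - tau j).

Definition supn (R : realType) (n : nat) (u : R -> 'rV[R]_n) : R :=
  sup (range (fun t => enorm (u t))).

Definition in_E (R : realType) (n : nat) (x : R -> 'rV[R]_n) : Prop :=
  (forall t, x (t + 2 * pi) = x t) /\
  (forall t, derivable x t 1) /\
  (forall t, derivable (derive1 x) t 1) /\
  continuous (derive1 (derive1 x)).

Definition normE (R : realType) (n : nat) (x : R -> 'rV[R]_n) : R :=
  Num.max (supn x) (Num.max (supn (derive1 x)) (supn (derive1 (derive1 x)))).

(* F_lambda(x) = 0, written after applying the isomorphism L:
   L x = lambda N(J x), i.e. x'' - x = lambda (f(t,x,x_t,x') - x). *)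
Definition F_zero (R : realType) (m n : nat) (tau : 'I_m -> R)
  (f : R -> 'rV[R]_n -> 'M[R]_(m, n) -> 'rV[R]_n -> 'rV[R]_n)
  (lam : R) (x : R -> 'rV[R]_n) : Prop :=
  forall t, derive1 (derive1 x) t - x t =
    lam *: (f t (x t) (delays tau x t) (derive1 x t) - x t).

(* Main.v *)
Require Import Defs.
From HB Require Import structures.
From mathcomp Require Import all_boot all_order all_algebra.
From mathcomp Require Import all_classical all_reals all_analysis.
From mathcomp.algebra_tactics Require Import ring lra.
Import Order.TTheory GRing.Theory Num.Theory.
Import numFieldNormedType.Exports.
Local Open Scope classical_set_scope.
Local Open Scope ring_scope.
Set Implicit Arguments. Unset Strict Implicit. Unset Printing Implicit Defensive.

Section H.
Variable R : realType.
Variable n : nat.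
Implicit Types u v : R -> 'rV[R]_n.

Lemma coord_derive u t k : derivable u t 1 ->
  is_derive t 1 (fun s => u s 0 k) (derive1 u t 0 k).
Proof.
move=> du; have dk := (derivable_mxP u t 1).1 du 0 k.
apply: DeriveDef => //; by rewrite derive1E (derive_mx du) mxE.
Qed.

Lemma edot_derive u v t : derivable u t 1 -> derivable v t 1 ->
  is_derive t 1 (fun s => edot (u s) (v s))
    (edot (derive1 u t) (v t) + edot (u t) (derive1 v t)).
Proof.
move=> du dv.
have -> : (fun s => edot (u s) (v s)) = \sum_(k < n) (fun s => u s 0 k * v s 0 k).
  by apply/funext => s; rewrite fct_sumE.
apply: is_derive_eq.
  apply: is_derive_sum => k.
  exact: (is_deriveM (coord_derive k du) (coord_derive k dv)).
rewrite /edot -big_split /=; apply: eq_bigr => k _.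
by rewrite addrC; congr (_ + _); rewrite mulrC.
Qed.

Lemma derivable_cont (g : R -> R) (t : R) : derivable g t 1 -> {for t, continuous g}.
Proof. by move=> /derivable1_diffP /differentiable_continuous. Qed.

Lemma nonincr (g dg : R -> R) : (forall t : R, is_derive t 1 g (dg t)) ->
  (forall t, dg t <= 0) -> forall s t, s <= t -> g t <= g s.
Proof.
move=> hd hn s t; rewrite le_eqVlt => /orP[/eqP -> //|st].
have cg : continuous g.
  by move=> x; apply: derivable_cont; have [] := hd x.
have [c _ e] := MVT st (fun x _ => hd x) (continuous_subspaceT cg).
rewrite -subr_le0 e; apply: mulr_le0_ge0 => //; first by rewrite subr_ge0 ltW.
Qed.

End H.

Section N.
Variable R : realType.
Variable n : nat.
Implicit Types a b : 'rV[R]_n.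

Lemma edotC a b : edot a b = edot b a.
Proof. by rewrite /edot; apply: eq_bigr => k _; rewrite mulrC. Qed.

Lemma edot_ge0 a : 0 <= edot a a.
Proof. by rewrite /edot; apply: sumr_ge0 => k _; rewrite -expr2 sqr_ge0. Qed.

Lemma enorm_ge0 a : 0 <= enorm a.
Proof. exact: sqrtr_ge0. Qed.

Lemma enorm_sq a : enorm a ^+ 2 = edot a a.
Proof. by rewrite /enorm sqr_sqrtr // edot_ge0. Qed.

Lemma coord_le a k : `|a 0 k| <= enorm a.
Proof.
rewrite -sqrtr_sqr /enorm ler_sqrt ?edot_ge0 // /edot (bigD1 k) //= expr2.
by rewrite lerDl; apply: sumr_ge0 => i _; rewrite -expr2 sqr_ge0.
Qed.

Lemma enorm_le a b : edot a a <= edot b b -> enorm a <= enorm b.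
Proof. by move=> h; rewrite /enorm ler_sqrt // edot_ge0. Qed.

Lemma enorm_le_coord a B : 0 <= B -> (forall k, `|a 0 k| <= B) -> enorm a <= n%:R * B.
Proof.
move=> B0 h.
rewrite -[n%:R * B]ger0_norm ?mulr_ge0 // -sqrtr_sqr /enorm ler_sqrt ?sqr_ge0 //.
apply: (@le_trans _ _ (\sum_(k < n) B ^+ 2)).
  apply: ler_sum => k _; rewrite expr2.
  apply: le_trans (ler_norm _) _; rewrite normrM.
  by apply: ler_pM => //.
rewrite sumr_const card_ord exprMn -[_ *+ n]mulr_natl ler_wpM2r ?sqr_ge0 //.
rewrite -natrX ler_nat; case: n => // m; rewrite expnS leq_pmulr //.
Qed.

Lemma edot_comb (a b c : 'rV[R]_n) (p q : R) : (forall k, c 0 k = p * a 0 k + q * b 0 k) ->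
  edot a c = p * edot a a + q * edot a b.
Proof.
move=> h; rewrite /edot !mulr_sumr -big_split; apply: eq_bigr => k _ /=.
rewrite h; ring.
Qed.

End N.

Section P3.
Variable R : realType.

Lemma per_red (T : Type) (p : R) (g : R -> T) : 0 < p ->
  (forall t, g (t + p) = g t) -> forall s, exists s', 0 <= s' <= p /\ g s = g s'.
Proof.
move=> p0 hg.
suff H : forall N : nat, forall s, -(N%:R * p) <= s <= N.+1%:R * p ->
    exists s', 0 <= s' <= p /\ g s = g s'.
  move=> s; have := archi_boundP (normr_ge0 (s / p)).
  set N := Num.bound _ => hN.
  have hN' : `|s| < N%:R * p.
    have pi0 : 0 < p^-1 by rewrite invr_gt0.
    by rewrite normrM (gtr0_norm pi0) ltr_pdivrMr // in hN.
  apply: (H N); move: hN' => /ltr_normlP [h1 h2].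
  have e : N.+1%:R * p = N%:R * p + p by rewrite -addn1 natrD mulrDl mul1r.
  rewrite e; move: h1 h2; set X := N%:R * p => h1 h2; apply/andP; split; lra.
elim=> [|N IH] s.
  by rewrite mul0r oppr0 mul1r => hs; exists s.
move=> /andP[h1 h2].
have e1 : N.+1%:R * p = N%:R * p + p by rewrite -addn1 natrD mulrDl mul1r.
have e2 : N.+2%:R * p = N%:R * p + p + p.
  by rewrite -e1 -addn1 natrD mulrDl mul1r.
have Np : 0 <= N%:R * p by rewrite mulr_ge0 // ltW.
rewrite e1 e2 in h1 h2 IH *; move: h1 h2 IH Np; set X := N%:R * p => h1 h2 IH Np.
have [hs|hs] := ltP (X + p) s.
  have [s' [hs' e]] := IH (s - p) ltac:(apply/andP; split; lra).
  by exists s'; split => //; rewrite -e -(hg (s - p)) subrK.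
have [hs2|hs2] := ltP s (- X).
  have [s' [hs' e]] := IH (s + p) ltac:(apply/andP; split; lra).
  by exists s'; split => //; rewrite -e hg.
apply: IH; apply/andP; split; lra.
Qed.
End P3.

Section P.
Variable R : realType.

Lemma derive1_per (V : normedModType R) (g : R -> V) (p : R) :
  (forall t, g (t + p) = g t) -> forall t, derive1 g (t + p) = derive1 g t.
Proof.
move=> hg t; rewrite /derive1.
have -> : (fun h : R => h^-1 *: (g (h + (t + p)) - g (t + p))) =
          (fun h : R => h^-1 *: (g (h + t) - g t)).
  by apply/funext => h; rewrite addrA !hg.
by [].
Qed.

Lemma pos_right (h : R -> R) (t0 d : R) : is_derive t0 1 h d -> 0 < d -> h t0 = 0 ->
  exists2 e, 0 < e & forall s, t0 < s < t0 + e -> 0 < h s.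
Proof.
move=> [dh dv] d0 h0.
have C : (fun e : R => e^-1 *: (h (e *: 1 + t0) - h t0)) @ 0^' --> d.
  by rewrite -dv; exact: dh.
have H : \forall e \near 0^', 0 < e^-1 *: (h (e *: 1 + t0) - h t0).
  by apply: (cvgr_gt d C).
move: H; rewrite /within /=; case/nbhs_ballP => e e0 He.
exists e => // s /andP[s1 s2].
have st : 0 < s - t0 by rewrite subr_gt0.
have := He (s - t0).
rewrite /ball /= sub0r normrN gtr0_norm // ltrBlDr addrC => /(_ s2 (lt0r_neq0 st)).
rewrite h0 subr0 /GRing.scale /= mulr1 subrK pmulr_rgt0 // invr_gt0 //.
Qed.
End P.

Unset Implicit Arguments.

Theorem lemma4p2 (R : realType) (n m : nat) (hn : (1 <= n)%N) (hm : (1 <= m)%N)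
  (tau : 'I_m -> R)
  (htau_pos : forall j, 0 < tau j)
  (htau_inc : forall i j : 'I_m, (i < j)%N -> tau i < tau j)
  (htau_lt : forall j, tau j < 2 * pi)
  (htau_sym : forall j : 'I_m, tau (rev_ord j) = 2 * pi - tau j)
  (f : R -> 'rV[R]_n -> 'M[R]_(m, n) -> 'rV[R]_n -> 'rV[R]_n)
  (* (A0) *)
  (hcont : continuous (fun p : R * 'rV[R]_n * 'M[R]_(m, n) * 'rV[R]_n =>
                          f p.1.1.1 p.1.1.2 p.1.2 p.2))
  (hper : forall t x y z, f (t + 2 * pi) x y z = f t x y z)
  (* (A1) *)
  (r : R) (hr : 0 < r)
  (hA1 : forall t x y z, r <= enorm x -> ymax y <= enorm x -> edot x z = 0 ->
           0 < edot x (f t x y z))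
  (* (A2) *)
  (phi : R -> R)
  (hphi_cont : {within `[0, +oo[, continuous phi})
  (hphi_pos : forall s, 0 <= s -> 0 < phi s)
  (hphi_int : (\int[lebesgue_measure]_(s in (`[0%R, +oo[ : set R)) (s / phi s)%:E = +oo)%E)
  (hA2 : forall t x y z, enorm x <= r -> ymax y <= r ->
           enorm (f t x y z) <= phi (enorm z))
  (* (A3) *)
  (alpha K : R) (halpha : 0 < alpha) (hK : 0 < K)
  (hA3 : forall t x y z, enorm x <= r -> ymax y <= r ->
           enorm (f t x y z) <= alpha * (edot x (f t x y z) + enorm z ^+ 2) + K) :
  exists C : R, 0 < C /\
    forall (lam : R) (x : R -> 'rV[R]_n), 0 <= lam <= 1 ->
      in_E x -> F_zero tau f lam x -> normE x < C.
Proof.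
have pi0 := pi_gt0 R.
have p0 : 0 < 2 * pi :> R by apply: mulr_gt0.
set K' := K + r.
set M1 := n%:R * (2 * pi * K').
have K'0 : 0 < K' by rewrite /K' addr_gt0.
have M1ge0 : 0 <= M1 by rewrite /M1 mulr_ge0 // mulr_ge0 // ltW.
have cphi : {within `[0, M1], continuous phi}.
  apply: continuous_subspaceW hphi_cont; apply: subset_itvl; by rewrite bnd_simp.
have [pm pmin pmax] := EVT_max M1ge0 cphi.
set Phi := phi pm.
have Phi0 : 0 < Phi by apply: hphi_pos; move: pmin; rewrite in_itv /= => /andP[].
exists (r + M1 + n%:R * (r + Phi) + 1); split.
  by rewrite ltr_pwDr // !addr_ge0 ?mulr_ge0 // ltW // addr_gt0.
move=> lam x /andP[l0 l1] [xper [dx [dx1 cx2]]] hF.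
set x1 := derive1 x.
set x2 := derive1 x1.
have Dx : forall t : R, is_derive t 1 x (x1 t).
  move=> t; apply: DeriveDef; [exact: dx | by rewrite /x1 derive1E].
have Dx1 : forall t : R, is_derive t 1 x1 (x2 t).
  move=> t; apply: DeriveDef; [exact: dx1 | by rewrite /x2 derive1E].
have x1per : forall t, x1 (t + 2 * pi) = x1 t by apply: derive1_per.
have hx2 : forall t k, x2 t 0 k = (1 - lam) * x t 0 k +
    lam * f t (x t) (delays tau x t) (x1 t) 0 k.
  move=> t k; have := congr1 (fun M : 'rV[R]_n => M 0 k) (hF t).
  rewrite /= !mxE => e.
  have -> : x2 t 0 k = x t 0 k + lam * (f t (x t) (delays tau x t) (x1 t) 0 k - x t 0 k).
    rewrite -e /x2 /x1; ring.
  ring.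
pose g := fun t => edot (x t) (x t).
pose hf := fun t => edot (x1 t) (x t) + edot (x t) (x1 t).
have Dg : forall t : R, is_derive t 1 g (hf t).
  by move=> t; exact: (edot_derive (dx t) (dx t)).
have Dh : forall t : R, is_derive t 1 hf (edot (x2 t) (x t) + edot (x1 t) (x1 t)
    + (edot (x1 t) (x1 t) + edot (x t) (x2 t))).
  move=> t; exact: (is_deriveD (edot_derive (dx1 t) (dx t)) (edot_derive (dx t) (dx1 t))).
have cg : continuous g by move=> t; apply: derivable_cont; have [] := Dg t.
have [t0 t0in gmax0] := EVT_max (ltW p0) (continuous_subspaceT cg).
have gmax : forall s, g s <= g t0.
  move=> s; have [s' [hs' e]] := per_red p0 xper s.
  by rewrite /g e; apply: gmax0; rewrite in_itv /= hs'.
have xle : forall s, enorm (x s) <= enorm (x t0) by move=> s; apply: enorm_le; apply: gmax.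
have S1 : enorm (x t0) < r.
  rewrite ltNge; apply/negP => hr0.
  have hy : ymax (delays tau x t0) <= enorm (x t0).
    rewrite /ymax; apply: bigmax_le => [|j _]; first exact: enorm_ge0.
    by rewrite /delays rowK; apply: xle.
  have hd : is_derive t0 1 g 0.
    apply: (@derive1_at_max _ g (t0 - 1) (t0 + 1)).
    - lra.
    - by move=> t _; have [] := Dg t.
    - rewrite in_itv /=; apply/andP; split; lra.
    - by move=> t _; apply: gmax.
  have h0 : hf t0 = 0.
    by have [_ e1] := Dg t0; have [_ e2] := hd; rewrite -e1 e2.
  have hxx1 : edot (x t0) (x1 t0) = 0.
    by move: h0; rewrite /hf edotC => h0; lra.
  have hpos := hA1 t0 (x t0) (delays tau x t0) (x1 t0) hr0 hy hxx1.
  have hxx : 0 < edot (x t0) (x t0).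
    by rewrite -enorm_sq exprn_gt0 // (lt_le_trans hr hr0).
  have hxx2 : 0 < edot (x t0) (x2 t0).
    rewrite (edot_comb (hx2 t0)).
    have P2 : 0 <= lam * edot (x t0) (f t0 (x t0) (delays tau x t0) (x1 t0)).
      by rewrite mulr_ge0 // ltW.
    have P1 : 0 <= (1 - lam) * edot (x t0) (x t0) by rewrite mulr_ge0 ?subr_ge0 // ltW.
    move: l1; rewrite le_eqVlt => /orP[/eqP l1e|l1'].
      by rewrite l1e subrr mul0r add0r mul1r.
    have : 0 < (1 - lam) * edot (x t0) (x t0) by rewrite mulr_gt0 // subr_gt0.
    lra.
  have hh' : 0 < edot (x2 t0) (x t0) + edot (x1 t0) (x1 t0)
      + (edot (x1 t0) (x1 t0) + edot (x t0) (x2 t0)).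
    by rewrite (edotC (x2 t0)); have := edot_ge0 (x1 t0); lra.
  have [e e0 He] := pos_right (Dh t0) hh' h0.
  have lt1 : t0 < t0 + e / 2 by rewrite ltrDl divr_gt0.
  have [c cin ec] := MVT lt1 (fun t _ => Dg t) (continuous_subspaceT cg).
  have hc : 0 < hf c.
    apply: He; move: cin; rewrite in_itv /= => /andP[c1 c2]; apply/andP; split => //.
    lra.
  have : 0 < g (t0 + e / 2) - g t0.
    by rewrite ec mulr_gt0 // subr_gt0.
  have := gmax (t0 + e / 2); lra.
have S1' : forall t, enorm (x t) < r by move=> t; exact: le_lt_trans (xle t) S1.
have Sy : forall t, ymax (delays tau x t) <= r.
  move=> t; rewrite /ymax; apply: bigmax_le => [|j _]; first exact: ltW.
  by rewrite /delays rowK; apply: ltW.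
pose G := fun t => alpha * edot (x t) (x1 t) + K' * t.
pose dG := fun t => alpha * (edot (x1 t) (x1 t) + edot (x t) (x2 t)) + K'.
have DG : forall t : R, is_derive t 1 G (dG t).
  move=> t.
  have H1 := is_deriveZ alpha (edot_derive (dx t) (dx1 t)).
  have H2 := is_deriveZ K' (is_derive_id t (1 : R)).
  have H3 := is_deriveD H1 H2.
  have -> : G = (alpha \*: (fun s => edot (x s) (derive1 x s))) + K' \*: id.
    by apply/funext => s; rewrite /G /= /GRing.scale /=.
  apply: is_derive_eq H3 _.
  by rewrite /dG /GRing.scale /= mulr1.
have B2 : forall t k, `|x2 t 0 k| <= dG t.
  move=> t k.
  set F := f t (x t) (delays tau x t) (x1 t).
  have hf3 := hA3 t (x t) (delays tau x t) (x1 t) (ltW (S1' t)) (Sy t).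
  rewrite -/F enorm_sq in hf3.
  have fk := le_trans (coord_le F k) hf3.
  have xk := le_trans (coord_le (x t) k) (ltW (S1' t)).
  rewrite /dG (edot_comb (hx2 t)) hx2 -/F.
  have n1 : `|(1 - lam) * x t 0 k + lam * F 0 k| <=
      (1 - lam) * r + lam * (alpha * (edot (x t) F + edot (x1 t) (x1 t)) + K).
    apply: le_trans (ler_normD _ _) _; rewrite !normrM (ger0_norm l0).
    rewrite ger0_norm ?subr_ge0 //.
    by apply: lerD; apply: ler_wpM2l => //; rewrite subr_ge0.
  have E : alpha * (edot (x1 t) (x1 t) + ((1 - lam) * edot (x t) (x t) +
      lam * edot (x t) F)) + K' -
      ((1 - lam) * r + lam * (alpha * (edot (x t) F + edot (x1 t) (x1 t)) + K)) =
      alpha * (1 - lam) * edot (x1 t) (x1 t) + alpha * (1 - lam) * edot (x t) (x t)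
      + (1 - lam) * K + lam * r.
    by rewrite /K'; ring.
  have l1' : 0 <= 1 - lam by rewrite subr_ge0.
  have Q1 : 0 <= alpha * (1 - lam) * edot (x1 t) (x1 t).
    by rewrite !mulr_ge0 ?edot_ge0 // ltW.
  have Q2 : 0 <= alpha * (1 - lam) * edot (x t) (x t).
    by rewrite !mulr_ge0 ?edot_ge0 // ltW.
  have Q3 : 0 <= (1 - lam) * K by rewrite mulr_ge0 // ltW.
  have Q4 : 0 <= lam * r by rewrite mulr_ge0 // ltW.
  move: n1 E Q1 Q2 Q3 Q4.
  set A := `|_|. set B := (1 - lam) * r + _. set D := alpha * _ + K'.
  move=> n1 E Q1 Q2 Q3 Q4; lra.
have mono : forall k s t, s <= t -> `|x1 t 0 k - x1 s 0 k| <= G t - G s.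
  move=> k s t st.
  have D1 : forall u : R, is_derive u 1 ((fun v => x1 v 0 k) - G) (x2 u 0 k - dG u).
    by move=> u; exact: (is_deriveB (coord_derive k (dx1 u)) (DG u)).
  have D2 : forall u : R, is_derive u 1 (- (fun v => x1 v 0 k) - G) (- x2 u 0 k - dG u).
    by move=> u; exact: (is_deriveB (is_deriveN (coord_derive k (dx1 u))) (DG u)).
  have N1 : forall u, x2 u 0 k - dG u <= 0.
    by move=> u; rewrite subr_le0; apply: le_trans (ler_norm _) (B2 u k).
  have N2 : forall u, - x2 u 0 k - dG u <= 0.
    by move=> u; rewrite subr_le0; apply: le_trans (ler_norm _) _; rewrite normrN B2.
  have h1 : x1 t 0 k - G t <= x1 s 0 k - G s := nonincr D1 N1 st.
  have h2 : - x1 t 0 k - G t <= - x1 s 0 k - G s := nonincr D2 N2 st.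
  move: (G t) (G s) (x1 t 0 k) (x1 s 0 k) h1 h2 => a b c d h1 h2.
  rewrite ler_norml; apply/andP; split; lra.
have Gp : forall t, G (t + 2 * pi) = G t + 2 * pi * K'.
  by move=> t; rewrite /G xper x1per; ring.
have x1b : forall t k, `|x1 t 0 k| <= 2 * pi * K'.
  move=> t k.
  have Dk : forall s : R, is_derive s 1 (fun u => x u 0 k) (x1 s 0 k).
    by move=> s; exact: (coord_derive k (dx s)).
  have dk : forall s : R, derivable (fun u => x u 0 k) s 1.
    by move=> s; have [] := Dk s.
  have ck : continuous (fun u => x u 0 k) by move=> s; apply: derivable_cont.
  have lt2 : t < t + 2 * pi by rewrite ltrDl.
  have ep : x t 0 k = x (t + 2 * pi) 0 k by rewrite xper.
  have [c cin hc] := Rolle lt2 (fun s _ => dk s) (continuous_subspaceT ck) ep.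
  have xc : x1 c 0 k = 0 by have [_ e1] := Dk c; have [_ e2] := hc; rewrite -e1 e2.
  move: cin; rewrite in_itv /= => /andP[c1 c2].
  have m1 := mono k t c (ltW c1).
  have m2 := mono k c (t + 2 * pi) (ltW c2).
  rewrite x1per xc subr0 Gp in m2.
  rewrite xc sub0r normrN in m1.
  have := normr_ge0 (x1 t 0 k).
  move: (G t) (G c) (`|x1 t 0 k|) m1 m2 => a b d m1 m2; lra.
have S2 : forall t, enorm (x1 t) <= M1.
  by move=> t; apply: enorm_le_coord; [rewrite mulr_ge0 // ltW | exact: x1b].
have S3 : forall t, enorm (x2 t) <= n%:R * (r + Phi).
  move=> t; apply: enorm_le_coord; first by rewrite addr_ge0 // ltW.
  move=> k; rewrite hx2.
  set F := f t (x t) (delays tau x t) (x1 t).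
  have fb : enorm F <= Phi.
    apply: le_trans (hA2 t (x t) (delays tau x t) (x1 t) (ltW (S1' t)) (Sy t)) _.
    by apply: pmax; rewrite in_itv /= enorm_ge0 S2.
  have fk := le_trans (coord_le F k) fb.
  have xk := le_trans (coord_le (x t) k) (ltW (S1' t)).
  apply: le_trans (ler_normD _ _) _; rewrite !normrM (ger0_norm l0).
  rewrite ger0_norm ?subr_ge0 //.
  have l1' : 0 <= 1 - lam by rewrite subr_ge0.
  have P1 : (1 - lam) * `|x t 0 k| <= (1 - lam) * r by apply: ler_wpM2l.
  have P2 : lam * `|F 0 k| <= lam * Phi by apply: ler_wpM2l.
  have P3 : 0 <= lam * r by rewrite mulr_ge0 // ltW.
  have P4 : 0 <= (1 - lam) * Phi by rewrite mulr_ge0 // ltW.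
  move: P1 P2 P3 P4; move: (`|x t 0 k|) (`|F 0 k|) => a b P1 P2 P3 P4; lra.
have supb : forall (u : R -> 'rV[R]_n) B, (forall t, enorm (u t) <= B) -> supn u <= B.
  move=> u B hB; apply: ge_sup; first by exists (enorm (u 0)), 0.
  by move=> _ [t _ <-].
have nP : 0 <= n%:R * (r + Phi) by rewrite mulr_ge0 // addr_ge0 // ltW.
have sx : supn x <= r by apply: supb => t; exact: ltW.
have sx1 : supn x1 <= M1 by apply: supb.
have sx2 : supn x2 <= n%:R * (r + Phi) by apply: supb.
rewrite /normE -/x1 -/x2 !gt_max.
move: sx sx1 sx2 nP; move: (supn x) (supn x1) (supn x2) (n%:R * (r + Phi)).
move=> a b c d h1 h2 h3 h4.
apply/and3P; split; lra.
Qed.
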